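(* Let $\mathcal{H} = \mathbb{C}^{d_1} \otimes \cdots \otimes \mathbb{C}^{d_n}$ and let $|\psi\rangle \in \mathcal{H}$ be a generic unit vector, i.e. $|\psi\rangle$ is not a product state and its best product state approximation is unique up to a global phase. Let $\lambda = \max_{|\pi\rangle} |\langle \pi|\psi\rangle|$ (maximum over product states), and let $|\pi\rangle$ be a best product state approximation chosen (by fixing its phase) so that $\langle \pi|\psi\rangle = \lambda > 0$. Define $$|\eta\rangle = \frac{1}{\sqrt{1-\lambda^2}} \left(\mathbb{1} - |\pi\rangle\langle\pi|\right)|\psi\rangle,$$ and for a step size $\theta > 0$ define the updated state $$|\tilde\psi\rangle = \frac{|\psi\rangle + \theta|\eta\rangle}{\| |\psi\rangle + \theta |\eta\rangle \|}.$$ Then there exists $\Theta > 0$ such that for every $\theta$ with $0 < \theta < \Theta$ one has $G(|\psi\rangle) < G(|\tilde\psi\rangle)$.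
   Context: A product state is a unit vector of the form $|a_1\rangle \otimes \cdots \otimes |a_n\rangle$ with $|a_k\rangle \in \mathbb{C}^{d_k}$. A best product state approximation of a unit vector $|\varphi\rangle$ is a product state $|\pi\rangle$ maximizing $|\langle\pi|\varphi\rangle|^2$ over all product states. The geometric measure of entanglement of a unit vector $|\varphi\rangle$ is $G(|\varphi\rangle) = 1 - \lambda^2(|\varphi\rangle)$, where $\lambda^2(|\varphi\rangle) = \max_{|\pi\rangle \text{ product}} |\langle \pi|\varphi\rangle|^2$. *)

(* Defs.v *)
From HB Require Import structures.
From mathcomp Require Import all_boot all_order all_algebra.
From mathcomp Require Import classical_sets reals.
From mathcomp Require Import complex.
Set Implicit Arguments. Unset Strict Implicit. Unset Printing Implicit Defensive.
Import Order.TTheory GRing.Theory Num.Theory.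
Local Open Scope ring_scope.
Local Open Scope complex_scope.
Local Open Scope classical_set_scope.

Section QDefs.
Variables (R : realType) (n : nat) (d : 'I_n -> nat).

(* basis multi-indices of C^{d_1} (x) ... (x) C^{d_n} *)
Definition idx := {dffun forall k : 'I_n, 'I_(d k)}.

Definition vec := idx -> R[i].

Definition inner (u v : vec) : R[i] := \sum_(i : idx) conjc (u i) * v i.

Definition vnorm (v : vec) : R := Num.sqrt (complex.Re (inner v v)).

Definition is_unit (v : vec) : Prop := vnorm v = 1.

Definition is_product_state (v : vec) : Prop :=
  is_unit v /\ exists a : forall k : 'I_n, 'I_(d k) -> R[i],
      forall i : idx, v i = \prod_(k < n) a k (i k).

Definition overlap2 (pi phi : vec) : R := (complex.Re `|inner pi phi|) ^+ 2.

Definition lambda2 (phi : vec) : R :=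
  sup [set overlap2 pi phi | pi in is_product_state].

Definition GM (phi : vec) : R := 1 - lambda2 phi.

Definition is_best_approx (phi pi : vec) : Prop :=
  is_product_state pi /\
  forall pi' : vec, is_product_state pi' -> overlap2 pi' phi <= overlap2 pi phi.

Definition unique_best_approx (phi : vec) : Prop :=
  forall p1 p2 : vec, is_best_approx phi p1 -> is_best_approx phi p2 ->
    exists c : R[i], `|c| = 1 /\ forall i : idx, p2 i = c * p1 i.

End QDefs.

(* Main.v *)
Require Import Defs.
From HB Require Import structures.
From mathcomp Require Import all_boot all_order all_algebra.
From mathcomp Require Import classical_sets reals.
From mathcomp Require Import complex.
From mathcomp Require Import all_classical all_reals.
From mathcomp Require Import topology normedtype derive.
From mathcomp Require Import lra ring.
Import Order.TTheory GRing.Theory Num.Theory.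
Local Open Scope ring_scope.
Local Open Scope complex_scope.
Import numFieldNormedType.Exports.
Import ArrowAsProduct.
Notation Rp := (@complex.Re _).
Notation Ip := (@complex.Im _).
Section CplxLemmas.
Context {R : realType}.
Implicit Types (x y z : R[i]) (k : R).

Definition sqn (z : R[i]) : R := Rp z ^+ 2 + Ip z ^+ 2.

Lemma sqn_ge0 z : 0 <= sqn z.
Proof. by rewrite /sqn addr_ge0 // sqr_ge0. Qed.

Lemma ReD x y : Rp (x + y) = Rp x + Rp y. Proof. by case: x y => a b [c e]. Qed.
Lemma ImD x y : Ip (x + y) = Ip x + Ip y. Proof. by case: x y => a b [c e]. Qed.
Lemma ReN x : Rp (- x) = - Rp x. Proof. by case: x. Qed.
Lemma ImN x : Ip (- x) = - Ip x. Proof. by case: x. Qed.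
Lemma ReM x y : Rp (x * y) = Rp x * Rp y - Ip x * Ip y. Proof. by case: x y => a b [c e]. Qed.
Lemma ImM x y : Ip (x * y) = Rp x * Ip y + Ip x * Rp y. Proof. by case: x y => a b [c e]. Qed.
Lemma ReJ x : Rp (conjc x) = Rp x. Proof. by case: x. Qed.
Lemma ImJ x : Ip (conjc x) = - Ip x. Proof. by case: x. Qed.
Lemma ReC k : Rp (k%:C) = k. Proof. by []. Qed.
Lemma ImC k : Ip (k%:C) = 0. Proof. by []. Qed.
Lemma Re1 : Rp (1 : R[i]) = 1. Proof. by []. Qed.
Lemma Im1 : Ip (1 : R[i]) = 0. Proof. by []. Qed.
Lemma Re0 : Rp (0 : R[i]) = 0. Proof. by []. Qed.
Lemma Im0 : Ip (0 : R[i]) = 0. Proof. by []. Qed.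

Lemma cplx_eq x y : Rp x = Rp y -> Ip x = Ip y -> x = y.
Proof. by case: x y => a b [c e] /= -> ->. Qed.

Lemma mulJc z : conjc z * z = (sqn z)%:C.
Proof. apply: cplx_eq; rewrite ?ReM ?ImM ?ReJ ?ImJ ?ReC ?ImC /sqn /=; ring. Qed.

Lemma sqn_eq0 z : sqn z = 0 -> z = 0.
Proof.
rewrite /sqn => h.
have h1 : Rp z = 0.
  by apply/eqP; rewrite -sqrf_eq0 eq_le sqr_ge0 -h lerDl sqr_ge0.
have h2 : Ip z = 0.
  by apply/eqP; rewrite -sqrf_eq0 eq_le sqr_ge0 -h lerDr sqr_ge0.
by move: h1 h2; clear h; case: z => a b /= -> ->.
Qed.

Lemma sqnM x y : sqn (x * y) = sqn x * sqn y.
Proof. rewrite /sqn ReM ImM; ring. Qed.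

Lemma sqnC k : sqn (k%:C) = k ^+ 2.
Proof. rewrite /sqn ReC ImC; ring. Qed.

Lemma normc_sqn z : Rp `|z| = Num.sqrt (sqn z).
Proof. by rewrite normc_def. Qed.

Lemma conjcC k : conjc (k%:C) = k%:C.
Proof. exact: conjc_real. Qed.

End CplxLemmas.
Section InnerLemmas.
Context {R : realType} {n : nat} {d : 'I_n -> nat}.
Local Notation vec := (@vec R n d).
Implicit Types (u v x y : vec) (a b : R[i]).

Lemma innerC u v : inner v u = conjc (inner u v).
Proof.
rewrite /inner rmorph_sum; apply: eq_bigr => i _.
by rewrite rmorphM /= conjcK mulrC.
Qed.

Lemma inner_combR u a b x y :
  inner u (fun i => a * x i + b * y i) = a * inner u x + b * inner u y.
Proof.
rewrite /inner !mulr_sumr -big_split; apply: eq_bigr => i _ /=; ring.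
Qed.

Lemma inner_combL u a b x y :
  inner (fun i => a * x i + b * y i) u = conjc a * inner x u + conjc b * inner y u.
Proof.
by rewrite innerC inner_combR rmorphD !rmorphM /= -!innerC.
Qed.

Lemma inner_scaleR u a x : inner u (fun i => a * x i) = a * inner u x.
Proof. by rewrite /inner mulr_sumr; apply: eq_bigr => i _; ring. Qed.

Lemma inner_scaleL u a x : inner (fun i => a * x i) u = conjc a * inner x u.
Proof. by rewrite innerC inner_scaleR rmorphM /= -innerC. Qed.

Definition nrm2 u : R := \sum_i sqn (u i).

Lemma nrm2_ge0 u : 0 <= nrm2 u.
Proof. by apply: sumr_ge0 => i _; exact: sqn_ge0. Qed.

Lemma inner_self u : inner u u = (nrm2 u)%:C.
Proof.
by rewrite /nrm2 rmorph_sum /inner; apply: eq_bigr => i _; rewrite mulJc.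
Qed.

Lemma vnormE u : vnorm u = Num.sqrt (nrm2 u).
Proof. by rewrite /vnorm inner_self. Qed.

Lemma is_unitE u : is_unit u <-> nrm2 u = 1.
Proof.
rewrite /is_unit vnormE; split => [h|->]; last by rewrite sqrtr1.
by rewrite -[nrm2 u]sqr_sqrtr ?nrm2_ge0 // h expr1n.
Qed.

Lemma nrm2_eq0 u : nrm2 u = 0 -> forall i, u i = 0.
Proof.
move=> h i; apply: sqn_eq0; move/eqP: h; rewrite psumr_eq0; last first.
  by move=> j _; exact: sqn_ge0.
by move/allP => /(_ i (mem_index_enum _)) /= /eqP.
Qed.

Lemma sqn_le_nrm2 u i : sqn (u i) <= nrm2 u.
Proof.
rewrite /nrm2 (bigD1 i) //= lerDl; apply: sumr_ge0 => j _; exact: sqn_ge0.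
Qed.

Lemma CS u x : nrm2 u = 1 -> sqn (inner u x) <= nrm2 x.
Proof.
move=> hu; set c := inner u x.
pose w : vec := fun i => 1 * x i + (- c) * u i.
have hw : inner w w = (nrm2 x - sqn c)%:C.
  rewrite /w inner_combL !inner_combR inner_self [inner x u]innerC -/c.
  rewrite !inner_self hu conjc1 rmorphN rmorphB /= -mulJc; ring.
have := nrm2_ge0 w; rewrite -[nrm2 w]/(Rp ((nrm2 w)%:C)) -inner_self hw /=.
by rewrite subr_ge0.
Qed.

End InnerLemmas.
Section Cont.
Context {R : realType} {I : eqType}.
Local Notation X := (I -> R).

Definition cR (f : X -> R) := continuous f.
Definition cC (g : X -> R[i]) := cR (fun x => Rp (g x)) /\ cR (fun x => Ip (g x)).

Lemma cR_ext f g : (forall x, f x = g x) -> cR f -> cR g.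
Proof. by move=> h; rewrite (_ : g = f) //; apply: funext => x; rewrite h. Qed.

Lemma cC_ext f g : (forall x, f x = g x) -> cC f -> cC g.
Proof. by move=> h; rewrite (_ : g = f) //; apply: funext => x; rewrite h. Qed.

Lemma cR_cst (c : R) : cR (fun=> c).
Proof. by move=> x; exact: cst_continuous. Qed.

Lemma cR_proj (i : I) : cR (fun x : X => x i).
Proof. exact: (@proj_continuous I (fun _ => R) i). Qed.

Lemma cR_add f g : cR f -> cR g -> cR (fun x => f x + g x).
Proof. move=> cf cg x. have := @continuousD R R^o X f g x (cf x) (cg x). exact. Qed.

Lemma cR_mul f g : cR f -> cR g -> cR (fun x => f x * g x).
Proof. move=> cf cg x. have := @continuousM R X f g x (cf x) (cg x). exact. Qed.

Lemma cR_opp f : cR f -> cR (fun x => - f x).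
Proof. move=> cf x. have := @continuousN R R^o X f x (cf x). exact. Qed.

Lemma cR_sub f g : cR f -> cR g -> cR (fun x => f x - g x).
Proof. by move=> cf cg; apply: cR_add => //; exact: cR_opp. Qed.

Lemma cC_cst (c : R[i]) : cC (fun=> c).
Proof. by split; exact: cR_cst. Qed.

Lemma cC_add f g : cC f -> cC g -> cC (fun x => f x + g x).
Proof.
move=> [f1 f2] [g1 g2]; split.
  by apply: (cR_ext (fun x => Rp (f x) + Rp (g x))) => [x|]; rewrite ?ReD //; exact: cR_add.
by apply: (cR_ext (fun x => Ip (f x) + Ip (g x))) => [x|]; rewrite ?ImD //; exact: cR_add.
Qed.

Lemma cC_mul f g : cC f -> cC g -> cC (fun x => f x * g x).
Proof.
move=> [f1 f2] [g1 g2]; split.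
  apply: (cR_ext (fun x => Rp (f x) * Rp (g x) - Ip (f x) * Ip (g x))) => [x|].
    by rewrite ReM.
  by apply: cR_sub; apply: cR_mul.
apply: (cR_ext (fun x => Rp (f x) * Ip (g x) + Ip (f x) * Rp (g x))) => [x|].
  by rewrite ImM.
by apply: cR_add; apply: cR_mul.
Qed.

Lemma cC_conj f : cC f -> cC (fun x => conjc (f x)).
Proof.
move=> [f1 f2]; split.
  by apply: (cR_ext (fun x => Rp (f x))) => // x; rewrite ReJ.
by apply: (cR_ext (fun x => - Ip (f x))) => [x|]; rewrite ?ImJ //; exact: cR_opp.
Qed.

Lemma cC_sum (J : Type) (r : seq J) (P : pred J) (F : J -> X -> R[i]) :
  (forall j, cC (F j)) -> cC (fun x => \sum_(j <- r | P j) F j x).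
Proof.
move=> hF; elim: r => [|j r IH].
  by apply: (cC_ext (fun=> 0)) => [x|]; rewrite ?big_nil //; exact: cC_cst.
case Pj: (P j).
  apply: (cC_ext (fun x => F j x + \sum_(j <- r | P j) F j x)) => [x|].
    by rewrite big_cons Pj.
  exact: cC_add.
by apply: (cC_ext (fun x => \sum_(j <- r | P j) F j x)) => // x; rewrite big_cons Pj.
Qed.

Lemma cC_prod (J : Type) (r : seq J) (P : pred J) (F : J -> X -> R[i]) :
  (forall j, cC (F j)) -> cC (fun x => \prod_(j <- r | P j) F j x).
Proof.
move=> hF; elim: r => [|j r IH].
  by apply: (cC_ext (fun=> 1)) => [x|]; rewrite ?big_nil //; exact: cC_cst.
case Pj: (P j).
  apply: (cC_ext (fun x => F j x * \prod_(j <- r | P j) F j x)) => [x|].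
    by rewrite big_cons Pj.
  exact: cC_mul.
by apply: (cC_ext (fun x => \prod_(j <- r | P j) F j x)) => // x; rewrite big_cons Pj.
Qed.

Lemma cR_sqn f : cC f -> cR (fun x => sqn (f x)).
Proof.
by move=> [f1 f2]; rewrite /sqn; apply: cR_add; rewrite ?expr2; apply: cR_mul.
Qed.

Lemma cC_pair (i j : I) : cC (fun x : X => x i +i* x j).
Proof. by split; exact: cR_proj. Qed.

End Cont.
Lemma exists_max {R : realType} (T : finType) (t0 : T) (F : T -> R) :
  exists j, forall j', F j' <= F j.
Proof.
case: (@arg_maxP _ R T t0 xpredT F isT) => j _ h; exists j => j'; exact: h.
Qed.

Lemma sqnV {R : realType} (z : R[i]) : z != 0 -> sqn (z^-1) = (sqn z)^-1.
Proof.
move=> nz; have h : sqn (z^-1) * sqn z = 1 by rewrite -sqnM mulVf // sqnC expr1n.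
have hz : sqn z != 0 by apply/eqP => /sqn_eq0 /eqP; rewrite (negbTE nz).
by rewrite -[sqn (z^-1)]mulr1 -(mulfV hz) mulrA h mul1r.
Qed.

Lemma sqn_le1 {R : realType} (z : R[i]) : sqn z <= 1 ->
  (-1 <= Rp z <= 1) /\ (-1 <= Ip z <= 1).
Proof.
rewrite /sqn => h; have h1 := sqr_ge0 (Rp z); have h2 := sqr_ge0 (Ip z).
split; apply/andP; split; nra.
Qed.

Lemma overlap2E {R : realType} {n} {d : 'I_n -> nat} (p q : vec R d) :
  overlap2 p q = sqn (inner p q).
Proof. by rewrite /overlap2 normc_sqn sqr_sqrtr // sqn_ge0. Qed.

Lemma sqn_norm1 {R : realType} (u : R[i]) : `|u| = 1 -> sqn u = 1.
Proof.
rewrite normc_def => /complexI h.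
by rewrite /sqn -[_ + _]sqr_sqrtr ?addr_ge0 ?sqr_ge0 // h expr1n.
Qed.
Section Param.
Context {R : realType} {n : nat} {d : 'I_n -> nat}.
Local Notation vec := (@vec R n d).
Local Notation idx := (@idx n d).
Definition Ix := (option ('I_n * nat) * bool)%type.
Local Notation X := (Ix -> R).

Definition cx (x : X) (t : option ('I_n * nat)) : R[i] := x (t, false) +i* x (t, true).

Definition Fv (x : X) : vec :=
  fun i => cx x None * \prod_(k < n) cx x (Some (k, nat_of_ord (i k))).

Lemma cC_Fv i : cC (fun x => Fv x i).
Proof.
apply: cC_mul; first exact: cC_pair.
by apply: cC_prod => k; exact: cC_pair.
Qed.

Lemma cC_inner (f g : X -> vec) :
  (forall i, cC (fun x => f x i)) -> (forall i, cC (fun x => g x i)) ->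
  cC (fun x => inner (f x) (g x)).
Proof.
move=> hf hg; rewrite /inner; apply: cC_sum => i.
by apply: cC_mul; [exact: cC_conj|].
Qed.

Lemma Fv_prod x : (0 < n)%N -> nrm2 (Fv x) = 1 -> is_product_state (Fv x).
Proof.
move=> n0 h; split; first by rewrite is_unitE.
pose k0 : 'I_n := Ordinal n0.
exists (fun k j => (if k == k0 then cx x None else 1) * cx x (Some (k, nat_of_ord j))).
move=> i; rewrite /Fv big_split /=; congr (_ * _).
by rewrite (bigD1 k0) //= big1 ?mulr1 // => k /negbTE ->.
Qed.

End Param.
Section Param2.
Context {R : realType} {n : nat} {d : 'I_n -> nat}.
Local Notation vec := (@vec R n d).
Local Notation idx := (@idx n d).
Local Notation X := (@Ix n -> R).

Definition comp (b : bool) (z : R[i]) := if b then Ip z else Rp z.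
Lemma compE z : comp false z +i* comp true z = z. Proof. by case: z. Qed.

Lemma prod_zero (a : forall k : 'I_n, 'I_(d k) -> R[i]) (i : idx) k :
  a k (i k) = 0 -> \prod_(k0 < n) a k0 (i k0) = 0.
Proof. by move=> h; rewrite (bigD1 k) //= h mul0r. Qed.

Lemma Fv_surj (p : vec) : is_product_state p ->
  exists x : X, (forall t, -1 <= x t <= 1) /\ p = Fv x.
Proof.
move=> [/is_unitE hu [a ha]].
have [i0 _] : exists i0 : idx, true.
  case: (pickP (@predT idx)) => [i0 _|h]; first by exists i0.
  move: hu; rewrite /nrm2 big1 => [/esym/eqP|i]; first by rewrite oner_eq0.
  by have := h i.
have hmax k : exists j, forall j', sqn (a k j') <= sqn (a k j).
  exact: (exists_max _ (i0 k) (fun j => sqn (a k j))).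
pose jm k := proj1_sig (cid (hmax k)).
have jmP k j' : sqn (a k j') <= sqn (a k (jm k)) := proj2_sig (cid (hmax k)) j'.
pose m k := a k (jm k).
have hm k : m k != 0.
  apply/eqP => hk; move: hu.
  have z j : a k j = 0.
    apply: sqn_eq0; apply/eqP; rewrite eq_le sqn_ge0 andbT.
    by have := jmP k j; rewrite -/(m k) hk /sqn /= expr0n /= addr0.
  rewrite /nrm2 big1 => [/esym/eqP|i _]; first by rewrite oner_eq0.
  by rewrite ha (@prod_zero a i k) ?z // /sqn /= expr0n /= addr0.
pose M := \prod_(k < n) m k.
pose x : X := fun t => match t.1 with
  | None => comp t.2 M
  | Some kj => match (insub kj.2 : option 'I_(d kj.1)) with
     | Some j' => comp t.2 (a kj.1 j' / m kj.1) | None => 0 end end.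
have cxN : cx x None = M by rewrite /cx /x /= compE.
have cxS k (j : 'I_(d k)) : cx x (Some (k, nat_of_ord j)) = a k j / m k.
  by rewrite /cx /x /= valK /= compE.
exists x; split; last first.
  apply: funext => i; rewrite ha /Fv cxN.
  under [X in _ = _ * X]eq_bigr do rewrite cxS.
  rewrite /M -big_split /=; apply: eq_bigr => k _.
  by rewrite mulrC divfK.
have sq1 z : sqn z <= 1 -> forall b, -1 <= comp b z <= 1.
  by move=> /sqn_le1 [h1 h2] [].
case=> [[[k j]|] b]; rewrite /x /=.
  case: (insub j : option 'I_(d k)) => [j'|]; last by apply/andP; split; lra.
  apply: sq1; rewrite sqnM sqnV // ler_pdivrMr ?mul1r //.
  by rewrite lt_def sqn_ge0 andbT; apply/eqP => /sqn_eq0 /eqP; rewrite (negbTE (hm k)).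
apply: sq1.
pose jmax : idx := finfun jm.
have -> : M = p jmax by rewrite ha /M; apply: eq_bigr => k _; rewrite /jmax ffunE.
by rewrite -hu sqn_le_nrm2.
Qed.

End Param2.
Section Basis.
Context {R : realType} {n : nat} {d : 'I_n -> nat}.
Local Notation vec := (@vec R n d).
Local Notation idx := (@idx n d).

Lemma sqn1 : sqn (1 : R[i]) = 1. Proof. by rewrite /sqn /= expr0n /= addr0 expr1n. Qed.
Lemma sqn0 : sqn (0 : R[i]) = 0. Proof. by rewrite /sqn /= expr0n /= addr0. Qed.

Lemma sqn_gt0 (z : R[i]) : z != 0 -> 0 < sqn z.
Proof. by move=> nz; rewrite lt_def sqn_ge0 andbT; apply/eqP => /sqn_eq0 /eqP; rewrite (negbTE nz). Qed.

Lemma basis_state (psi : vec) : nrm2 psi = 1 ->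
  exists e, is_product_state e /\ 0 < sqn (inner e psi).
Proof.
move=> hpsi.
have [i hi] : exists i, psi i != 0.
  case: (pselect (exists i, psi i != 0)) => // h.
  have z i : psi i = 0.
    by case: (eqVneq (psi i) 0) => // hi; exfalso; apply: h; exists i.
  by move: hpsi; rewrite /nrm2 big1 => [/esym/eqP|j _]; rewrite ?oner_eq0 // z sqn0.
pose e : vec := fun i' => \prod_(k < n) (if i' k == i k then 1 else 0).
have e_i : e i = 1 by rewrite /e big1 // => k _; rewrite eqxx.
have e_o i' : i' != i -> e i' = 0.
  move=> ne; have [k hk] : exists k, i' k != i k.
    case: (pselect (exists k, i' k != i k)) => // h; exfalso.
    move/negP: ne; apply; apply/eqP/ffunP => k; apply/eqP.
    by apply/negPn/negP => hk; apply: h; exists k.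
  by rewrite /e (bigD1 k) //= (negbTE hk) mul0r.
exists e; split.
  split; last by exists (fun k j => if j == i k then 1 else 0).
  rewrite is_unitE /nrm2 (bigD1 i) //= big1 ?addr0 ?e_i ?sqn1 // => j hj.
  by rewrite e_o // sqn0.
rewrite /inner (bigD1 i) //= big1 ?addr0; last first.
  by move=> j hj; rewrite e_o // rmorph0 mul0r.
by rewrite e_i rmorph1 mul1r sqn_gt0.
Qed.

End Basis.
Lemma key_ineq {R : realType} (lam s t del a1 a2 b1 b2 : R) :
  0 < lam -> 0 < s -> s ^+ 2 = 1 - lam ^+ 2 -> a1 ^+ 2 + a2 ^+ 2 <= lam ^+ 2 ->
  b1 ^+ 2 + b2 ^+ 2 <= 1 -> 0 < t -> t <= 1 -> t <= del / 4 -> t <= lam ^+ 2 / 2 ->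
  0 < del ->
  (a1 ^+ 2 + a2 ^+ 2 <= lam ^+ 2 - del \/ a1 * b1 + a2 * b2 <= s * lam ^+ 2 / 2) ->
  ((a1 + t * b1) ^+ 2 + (a2 + t * b2) ^+ 2) / (1 + 2 * s * t + t ^+ 2)
    <= lam ^+ 2 - Num.min (del / 4) (t * s * lam ^+ 2 / 8).
Proof.
move=> l0 s0 hs ha hb t0 t1 td tl d0 hcase.
set X := (_ + _ ^+ 2); set N := (1 + _ + _).
have s1 : s <= 1 by nra.
have N1 : 1 <= N.
  have st : 0 <= 2 * s * t by nra.
  have tt : 0 <= t ^+ 2 by nra.
  rewrite /N; lra.
have N4 : N <= 4.
  have st : 2 * s * t <= 2 by nra.
  have tt : t ^+ 2 <= 1 by nra.
  rewrite /N; lra.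
have N0 : 0 < N by lra.
have X0 : 0 <= X by rewrite /X addr_ge0 ?sqr_ge0.
have ab : a1 * b1 + a2 * b2 <= 1.
  have q1 := sqr_ge0 (a1 - b1); have q2 := sqr_ge0 (a2 - b2).
  have l1 : lam ^+ 2 <= 1 by have := sqr_ge0 s; lra.
  have : (a1 - b1) ^+ 2 + (a2 - b2) ^+ 2 = a1 ^+ 2 + a2 ^+ 2 + (b1 ^+ 2 + b2 ^+ 2) - 2 * (a1 * b1 + a2 * b2) by ring.
  lra.
have hX : X = (a1 ^+ 2 + a2 ^+ 2) + 2 * t * (a1 * b1 + a2 * b2) + t ^+ 2 * (b1 ^+ 2 + b2 ^+ 2).
  by rewrite /X; ring.
rewrite ler_pdivrMr //.
case: hcase => [hA|hB].
  have : X <= lam ^+ 2 - del / 4.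
    rewrite hX.
    have e1 : t ^+ 2 * (b1 ^+ 2 + b2 ^+ 2) <= t by nra.
    have e2 : 2 * t * (a1 * b1 + a2 * b2) <= 2 * t by nra.
    lra.
  have m1 : Num.min (del / 4) (t * s * lam ^+ 2 / 8) <= del / 4 by rewrite ge_min lexx.
  move=> h; apply: (le_trans h).
  have y0 : 0 <= lam ^+ 2 - del / 4 by lra.
  apply: (@le_trans _ _ ((lam ^+ 2 - del / 4) * N)); first by nra.
  by apply: ler_wpM2r; lra.
have m1 : Num.min (del / 4) (t * s * lam ^+ 2 / 8) <= t * s * lam ^+ 2 / 8 by rewrite ge_min lexx orbT.
have hq : 0 <= t * s * lam ^+ 2 / 8 by apply: divr_ge0 => //; apply: mulr_ge0; [apply: mulr_ge0|]; lra.
have hX2 : X <= lam ^+ 2 + t * s * lam ^+ 2 + t ^+ 2.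
  rewrite hX.
  have e1 : t ^+ 2 * (b1 ^+ 2 + b2 ^+ 2) <= t ^+ 2 by nra.
  have e2 : 2 * t * (a1 * b1 + a2 * b2) <= t * s * lam ^+ 2 by nra.
  lra.
have hX3 : X <= lam ^+ 2 * N - t * s * lam ^+ 2 / 2.
  have ts0 : 0 <= t * s by nra.
  have tsl : t * s <= lam ^+ 2 / 2 by nra.
  have e3 : t ^+ 2 * s ^+ 2 <= t * s * lam ^+ 2 / 2.
    have -> : t ^+ 2 * s ^+ 2 = (t * s) * (t * s) by ring.
    have -> : t * s * lam ^+ 2 / 2 = (t * s) * (lam ^+ 2 / 2) by ring.
    exact: ler_wpM2l.
  rewrite /N; nra.
apply: (le_trans hX3).
have e4 : (t * s * lam ^+ 2 / 8) * N <= t * s * lam ^+ 2 / 2 by nra.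
have e5 : Num.min (del / 4) (t * s * lam ^+ 2 / 8) * N <= (t * s * lam ^+ 2 / 8) * N.
  by apply: ler_wpM2r; lra.
nra.
Qed.

Local Open Scope classical_set_scope.
Theorem mainTheorem4 (R : realType) (n : nat) (d : 'I_n -> nat)
    (psi pi : vec R d) :
  is_unit psi ->
  ~ is_product_state psi ->
  unique_best_approx psi ->
  is_best_approx psi pi ->
  inner pi psi = (Num.sqrt (lambda2 psi))%:C ->
  let lam := Num.sqrt (lambda2 psi) in
  let eta : vec R d := fun i =>
    ((Num.sqrt (1 - lam ^+ 2))^-1)%:C * (psi i - inner pi psi * pi i) in
  exists Theta : R, 0 < Theta /\
    forall theta : R, 0 < theta -> theta < Theta ->
      let v : vec R d := fun i => psi i + theta%:C * eta i in
      let psit : vec R d := fun i => v i / (vnorm v)%:C in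
      GM psi < GM psit.
Proof.
move=> Hu Hnp Huniq Hbest Hinn lam eta.
have Hpsi : nrm2 psi = 1 by apply/is_unitE.
case: (Hbest) => Hpip Hmax0.
have Hpi : nrm2 pi = 1 by apply/is_unitE; case: Hpip.
have Hmax p : is_product_state p -> sqn (inner p psi) <= sqn (inner pi psi).
  by move=> hp; rewrite -!overlap2E; exact: Hmax0.
have HL : lambda2 psi = sqn (inner pi psi).
  rewrite /lambda2; apply/eqP; rewrite eq_le; apply/andP; split.
    apply: ge_sup; first by exists (overlap2 pi psi); exists pi.
    by move=> y [p hp <-]; rewrite overlap2E; exact: Hmax.
  apply: sup_upper_bound; last by exists pi => //; rewrite overlap2E.
  split; first by exists (overlap2 pi psi); exists pi.
  by exists (sqn (inner pi psi)) => y [p hp <-]; rewrite overlap2E; exact: Hmax.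
have lam2 : lam ^+ 2 = sqn (inner pi psi) by rewrite /lam HL sqr_sqrtr // sqn_ge0.
have lam0 : 0 <= lam by exact: sqrtr_ge0.
have Hinn' : inner pi psi = lam%:C by rewrite Hinn.
have Hmax' p : is_product_state p -> sqn (inner p psi) <= lam ^+ 2.
  by move=> hp; rewrite lam2; exact: Hmax.
have lampos : 0 < lam.
  have [e [he pe]] := basis_state psi Hpsi.
  have := Hmax' e he => h.
  rewrite lt_def lam0 andbT; apply/eqP => l0; move: h; rewrite l0 expr0n /=; lra.
have Hpsipi : inner psi pi = lam%:C by rewrite innerC Hinn' conjcC.
pose w : vec R d := fun i => 1 * psi i + (- lam%:C) * pi i.
have Hw : nrm2 w = 1 - lam ^+ 2.
  apply: complexI; rewrite -inner_self /w inner_combL !inner_combR !inner_self Hpsi Hpi Hinn' Hpsipi.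
  apply: cplx_eq => /=; ring.
have lam1 : lam ^+ 2 < 1.
  rewrite lt_def; have := nrm2_ge0 w; rewrite Hw subr_ge0 => ->; rewrite andbT.
  apply/eqP => l1; apply: Hnp.
  have w0 : nrm2 w = 0 by rewrite Hw l1 subrr.
  have lam_1 : lam = 1 by apply/eqP; rewrite -sqrp_eq1 // l1.
  have -> : psi = pi.
    apply: funext => i; have := nrm2_eq0 w w0 i; rewrite /w lam_1 => h.
    apply/eqP; rewrite -subr_eq0; apply/eqP; rewrite -h.
    move: (psi i) (pi i) => [a1 a2] [b1 b2]; apply: cplx_eq => /=; ring.
  exact: Hpip.
set s := Num.sqrt (1 - lam ^+ 2).
have s0 : 0 < s by rewrite sqrtr_gt0 subr_gt0.
have s2 : s ^+ 2 = 1 - lam ^+ 2 by rewrite sqr_sqrtr // subr_ge0 ltW.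
have Hn : (0 < n)%N.
  case: (posnP n) => // n0; exfalso.
  have nok (k : 'I_n) : False by have := leq_trans (ltn_ord k) (eq_leq n0).
  have alleq (i j : idx d) : i = j by apply/ffunP => k; case: (nok k).
  have [i0 _] : exists i0 : idx d, true.
    case: (pickP (@predT (idx d))) => [i0 _|h]; first by exists i0.
    move: Hpsi; rewrite /nrm2 big1 => [/esym/eqP|i]; first by rewrite oner_eq0.
    by have := h i.
  have pi1 i : pi i = 1.
    by case: Hpip => _ [a ->]; apply: big1 => k; case: (nok k).
  have sum1 (F : idx d -> R[i]) : \sum_i F i = F i0.
    by rewrite (bigD1 i0) //= big1 ?addr0 // => j; rewrite (alleq j i0) eqxx.
  have sum2 (F : idx d -> R) : \sum_i F i = F i0.
    by rewrite (bigD1 i0) //= big1 ?addr0 // => j; rewrite (alleq j i0) eqxx.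
  move: lam1; rewrite lam2 /inner sum1 pi1 rmorph1 mul1r.
  by move: Hpsi; rewrite /nrm2 sum2 => ->; rewrite ltxx.
pose kap := s ^+ 2 * lam ^+ 2 / 2.
have kap0 : 0 < kap by rewrite /kap; apply: divr_gt0 => //; apply: mulr_gt0; apply: exprn_gt0.
pose Dfn (a c : R[i]) := sqn a - lam * (Rp a * Rp c + Ip a * Ip c).
have Hclaim : exists2 del, 0 < del & forall p, is_product_state p ->
    sqn (inner p psi) <= lam ^+ 2 - del \/ Dfn (inner p psi) (inner p pi) <= kap.
  pose g1 (x : @Ix n -> R) := sqn (inner (Fv x) psi).
  pose g2 (x : @Ix n -> R) := Dfn (inner (Fv x) psi) (inner (Fv x) pi).
  pose g3 (x : @Ix n -> R) := nrm2 (@Fv R n d x).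
  have cpsi : cC (fun x : @Ix n -> R => inner (Fv x) psi).
    by apply: cC_inner => i; [exact: cC_Fv | exact: cC_cst].
  have cpi : cC (fun x : @Ix n -> R => inner (Fv x) pi).
    by apply: cC_inner => i; [exact: cC_Fv | exact: cC_cst].
  have cg1 : cR g1 by exact: cR_sqn.
  have cg2 : cR g2.
    case: cpsi => c1 c2; case: cpi => c3 c4.
    apply: cR_sub; first exact: cR_sqn.
    by apply: cR_mul; [exact: cR_cst | apply: cR_add; apply: cR_mul].
  have cg3 : cR g3.
    apply: (cR_ext (fun x => Rp (inner (Fv x) (Fv x)))) => [x|].
      by rewrite inner_self.
    by case: (cC_inner (@Fv R n d) (@Fv R n d) cC_Fv cC_Fv).
  pose box := [set x : @Ix n -> R | forall t, `[-1, 1]%classic (x t)].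
  have cbox : compact box.
    exact: (@tychonoff (@Ix n) (fun _ => (R:topologicalType)) (fun _ => `[-1,1]%classic) (fun i => @segment_compact R (-1) 1)).
  pose K := box `&` [set x | g3 x = 1] `&` [set x | kap <= g2 x].
  have cK : compact K.
    apply: compact_closedI; first apply: compact_closedI => //.
      apply: (preimage_closed (f := g3) (D := [set y | y = 1])); [move=> x _; exact: cg3 | exact: closed_eq].
    apply: (preimage_closed (f := g2) (D := [set y | kap <= y])); [move=> x _; exact: cg2 | exact: closed_ge].
  have inK x : (forall t, -1 <= x t <= 1) -> g3 x = 1 -> kap <= g2 x -> K x.
    by move=> hb h3 h2; split; [split|] => // t; rewrite /= in_itv /=; exact: hb.
  case: (pselect (K !=set0)) => [K0|K0].
    have [c cKc cmax] : exists2 c, c \in K & forall t, t \in K -> g1 t <= g1 c.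
      by apply: compact_EVT_max => //; apply: continuous_subspaceT; exact: cg1.
    move: cKc; rewrite inE => -[[cb c3] c2].
    have pc : is_product_state (Fv c) := Fv_prod c Hn c3.
    have g1c : g1 c < lam ^+ 2.
      rewrite lt_def Hmax' // andbT; apply/eqP => eq.
      have hb : is_best_approx psi (Fv c).
        split => // p hp; rewrite !overlap2E -/(g1 c) -eq; exact: Hmax'.
      have [u [hu hpu]] := Huniq _ _ Hbest hb.
      have Fvc : Fv c = (fun i => u * pi i) by apply: funext.
      have a_ : inner (Fv c) psi = conjc u * lam%:C by rewrite Fvc inner_scaleL Hinn'.
      have c_ : inner (Fv c) pi = conjc u * 1 by rewrite Fvc inner_scaleL inner_self Hpi.
      move: c2; rewrite /g2 /Dfn /= a_ c_ /sqn.
      move: (u) => [u1 u2] /=.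
      set E := (X in kap <= X); have -> : E = 0 by rewrite /E; ring.
      lra.
    exists (lam ^+ 2 - g1 c); first by rewrite subr_gt0.
    move=> p hp; have [x [xb ex]] := Fv_surj p hp.
    have x3 : g3 x = 1 by rewrite /g3 -ex; case: hp => /is_unitE.
    case: (lerP kap (g2 x)) => h2; last by right; rewrite ex; exact: ltW.
    left; have := cmax x (mem_set (inK x xb x3 h2)).
    by rewrite /g1 ex => h; lra.
  exists 1 => // p hp; have [x [xb ex]] := Fv_surj p hp.
  have x3 : g3 x = 1 by rewrite /g3 -ex; case: hp => /is_unitE.
  case: (lerP kap (g2 x)) => h2; last by right; rewrite ex; exact: ltW.
  by exfalso; apply: K0; exists x; exact: inK.
have [del del0 Hdel] := Hclaim.
have d4 : 0 < del / 4 by apply: divr_gt0.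
have l2 : 0 < lam ^+ 2 / 2 by apply: divr_gt0 => //; exact: exprn_gt0.
exists (Num.min 1 (Num.min (del / 4) (lam ^+ 2 / 2))).
split.
  by rewrite !lt_min ltr01 d4 l2.
move=> theta t0 tT; cbv zeta.
set v := (fun i => psi i + theta%:C * eta i).
set psit := (fun i => v i / (vnorm v)%:C).
move: tT; rewrite !lt_min => /andP [/ltW t1 /andP [/ltW td /ltW tl]].
pose A := 1 + theta * s^-1.
pose B := - (theta * s^-1 * lam).
have sn0 : s != 0 by rewrite gt_eqF.
have Ev : v = fun i => A%:C * psi i + B%:C * pi i.
  apply: funext => i; rewrite /v /eta Hinn' -/s /A /B.
  move: (psi i) (pi i) => [p1 p2] [q1 q2]; apply: cplx_eq => /=; ring.
pose N := 1 + 2 * s * theta + theta ^+ 2.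
have N1 : 1 <= N.
  have : 0 <= 2 * s * theta by apply: mulr_ge0; [apply: mulr_ge0|]; lra.
  have := sqr_ge0 theta; rewrite /N; lra.
have N0 : 0 < N by lra.
have EN : nrm2 v = N.
  apply: complexI; rewrite -inner_self Ev inner_combL !inner_combR !inner_self Hpsi Hpi Hinn' Hpsipi.
  apply: cplx_eq => /=.
    transitivity (1 + 2 * theta * s^-1 * (1 - lam ^+ 2) + theta ^+ 2 * s^-1 ^+ 2 * (1 - lam ^+ 2)).
      rewrite /A /B; ring.
    rewrite -s2 /N; field; exact: sn0.
  by rewrite !(mul0r, mulr0, oppr0, addr0, add0r, subr0, sub0r).
set sN := Num.sqrt N.
have sN0 : 0 < sN by rewrite sqrtr_gt0.
have hN : N = sN ^+ 2 by rewrite sqr_sqrtr // ltW.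
have Epsit : psit = fun i => (A / sN)%:C * psi i + (B / sN)%:C * pi i.
  apply: funext => i; rewrite /psit vnormE EN -/sN Ev.
  have sNn : sN != 0 by rewrite gt_eqF.
  move: (psi i) (pi i) => [p1 p2] [q1 q2]; apply: cplx_eq => /=; field;
    rewrite ?expr0n /= ?addr0 ?sqrf_eq0 //.
pose mu := Num.min (del / 4) (theta * s * lam ^+ 2 / 8).
have mu0 : 0 < mu.
  rewrite lt_min d4 /=; apply: divr_gt0 => //; apply: mulr_gt0; [apply: mulr_gt0|] => //.
  exact: exprn_gt0.
have Hbound p : is_product_state p -> overlap2 p psit <= lam ^+ 2 - mu.
  move=> hp.
  have ha := Hmax' p hp.
  have hcs := CS p w (proj1 (is_unitE p) (proj1 hp)).
  rewrite Hw -s2 /w inner_combR in hcs.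
  have hc := Hdel p hp.
  rewrite overlap2E Epsit inner_combR.
  move: ha hcs hc; rewrite /Dfn /sqn.
  move: (inner p psi) (inner p pi) => [a1 a2] [c1 c2] /= ha hcs hc.
  pose b1 := (a1 - lam * c1) / s.
  pose b2 := (a2 - lam * c2) / s.
  have -> : (Rp ((A / sN)%:C * (a1 +i* a2) + (B / sN)%:C * (c1 +i* c2))) ^+ 2 +
            (Ip ((A / sN)%:C * (a1 +i* a2) + (B / sN)%:C * (c1 +i* c2))) ^+ 2 =
            ((a1 + theta * b1) ^+ 2 + (a2 + theta * b2) ^+ 2) / (1 + 2 * s * theta + theta ^+ 2).
    rewrite -/N hN /= /b1 /b2 /A /B.
    have sNn : sN != 0 by rewrite gt_eqF.
    by field; rewrite sNn sn0.
  apply: (@key_ineq R lam s theta del a1 a2 b1 b2 lampos s0 s2 ha) => //.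
  - rewrite /b1 /b2.
    have -> : ((a1 - lam * c1) / s) ^+ 2 + ((a2 - lam * c2) / s) ^+ 2 =
              ((a1 - lam * c1) ^+ 2 + (a2 - lam * c2) ^+ 2) / s ^+ 2 by field.
    rewrite ler_pdivrMr ?exprn_gt0 // mul1r.
    move: hcs; set E := (X in X <= _) => hE.
    have <- : E = (a1 - lam * c1) ^+ 2 + (a2 - lam * c2) ^+ 2 by rewrite /E /=; ring.
    exact: hE.
  - case: hc => hc; [left; exact: hc | right].
    have -> : a1 * b1 + a2 * b2 = (a1 ^+ 2 + a2 ^+ 2 - lam * (a1 * c1 + a2 * c2)) / s.
      by rewrite /b1 /b2; field.
    rewrite ler_pdivrMr //.
    apply: (le_trans hc); rewrite /kap.
    have -> : s * lam ^+ 2 / 2 * s = s ^+ 2 * lam ^+ 2 / 2 by ring.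
    by [].
have Hsup : lambda2 psit <= lam ^+ 2 - mu.
  apply: ge_sup; first by exists (overlap2 pi psit); exists pi.
  by move=> y [p hp <-]; exact: Hbound.
rewrite /GM HL -lam2; lra.
Qed.
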